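(* Let $I_T\subseteq\mathbb{K}[x_1,\dots,x_d]$ be a toric ideal with $I_T\neq\langle x_1-1,\dots,x_d-1\rangle$. There exists a non-trivial linear loop whose invariant ideal is exactly $I_T$.
   Context: $\mathbb{K}=\overline{\mathbb{Q}}$. For an integer matrix $A=(a_{ij})\in\mathbb{Z}^{s\times d}$, let $\pi_A:\mathbb{K}[x_1,\dots,x_d]\to\mathbb{K}[z_1^{\pm1},\dots,z_s^{\pm1}]$ be the ring homomorphism sending $x_j\mapsto z_1^{a_{1j}}\cdots z_s^{a_{sj}}$; the toric ideal $I_A$ is the kernel of $\pi_A$, and a toric ideal is an ideal of the form $I_A$ for some integer matrix $A$. A linear loop with initial vector $\bm{s}\in\mathbb{Q}^d$ and update matrix $M\in\mathbb{Q}^{d\times d}$ has orbit $\{M^n\bm{s}: n\ge0\}$; a polynomial $P\in\mathbb{K}[\bm{x}]$ is an invariant if $P(M^n\bm{s})=0$ for all $n\ge0$, and the invariant ideal is the ideal of all invariants. The loop is non-trivial if its orbit is infinite. *)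

(* Defs.v *)
From HB Require Import structures.
From mathcomp Require Import all_boot all_order all_algebra all_field.
From mathcomp Require Import mpoly.
Set Implicit Arguments. Unset Strict Implicit. Unset Printing Implicit Defensive.
Import Order.TTheory GRing.Theory Num.Theory.
Local Open Scope ring_scope.

(* The exponent in Z^s of the Laurent monomial pi_A(x^m) = prod_j (z^{A_{.j}})^{m_j}. *)
Definition toric_exp (s d : nat) (A : 'M[int]_(s, d)) (m : 'X_{1..d}) : {ffun 'I_s -> int} :=
  [ffun i => \sum_(j < d) A i j * (m j)%:Z].

(* P lies in I_A = ker pi_A: every coefficient of the Laurent polynomial pi_A(P)
   (at every exponent e in Z^s) vanishes. *)
Definition toric_ideal (s d : nat) (A : 'M[int]_(s, d)) (P : {mpoly algC[d]}) : Prop :=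
  forall e : {ffun 'I_s -> int},
    \sum_(m <- msupp P | toric_exp A m == e) P@_m = 0.

Definition ideal_xm1 (d : nat) (P : {mpoly algC[d]}) : Prop :=
  exists c : 'I_d -> {mpoly algC[d]}, P = \sum_(i < d) c i * ('X_i - 1).

Definition orbit_pt (d : nat) (M : 'M[rat]_d) (s : 'cV[rat]_d) (n : nat) : 'I_d -> algC :=
  fun i => ratr ((M ^+ n *m s) i ord0).

Definition invariant_ideal (d : nat) (M : 'M[rat]_d) (s : 'cV[rat]_d) (P : {mpoly algC[d]}) : Prop :=
  forall n : nat, P.@[orbit_pt M s n] = 0.

Definition nontrivial_loop (d : nat) (M : 'M[rat]_d) (s : 'cV[rat]_d) : Prop :=
  ~ exists l : seq 'cV[rat]_d, forall n : nat, M ^+ n *m s \in l.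

(* Main.v *)
Require Import Defs.
From HB Require Import structures.
From mathcomp Require Import all_boot all_order all_algebra all_field.
From mathcomp Require Import mpoly zify ring.
Import GRing.Theory Num.Theory.
Local Open Scope ring_scope.
Fixpoint pr (k : nat) : nat :=
  match k with 0 => s2val (prime_above 1) | k'.+1 => s2val (prime_above (pr k')) end.

Lemma pr_prime k : prime (pr k).
Proof. by case: k => [|k] /=; case: prime_above. Qed.

Lemma pr_lt k : (pr k < pr k.+1)%N.
Proof. by rewrite /=; case: prime_above. Qed.

Lemma pr_inj : injective pr.
Proof.
have mono : {homo pr : a b / (a < b)%N}.
  by apply: homo_ltn => //= k; [exact: ltn_trans | exact: pr_lt].
move=> a b e; apply/eqP; case: (ltngtP a b) => // h.
  by move: (mono _ _ h); rewrite e ltnn.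
by move: (mono _ _ h); rewrite e ltnn.
Qed.

Lemma pr_gt0 k : (0 < pr k)%N.
Proof. exact: prime_gt0 (pr_prime k). Qed.

Lemma prC_neq0 k : ((pr k)%:R : algC) != 0.
Proof. by rewrite pnatr_eq0 -lt0n pr_gt0. Qed.

Lemma logn_prod_pr s (a : 'I_s -> nat) (k : 'I_s) :
  logn (pr k) (\prod_(i < s) pr i ^ a i) = a k.
Proof.
rewrite (bigD1 k) //= lognM ?expn_gt0 ?pr_gt0 //; last first.
  by rewrite prodn_gt0 // => i; rewrite expn_gt0 pr_gt0.
rewrite lognX logn_prime ?pr_prime // eqxx muln1.
suff -> : logn (pr k) (\prod_(i < s | i != k) pr i ^ a i) = 0%N by rewrite addn0.
suff [] : (0 < \prod_(i < s | i != k) pr i ^ a i)%N /\ logn (pr k) (\prod_(i < s | i != k) pr i ^ a i) = 0%N by [].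
apply: (big_ind (fun x => (0 < x)%N /\ logn (pr k) x = 0%N)).
- by split => //; rewrite logn1.
- move=> x y [x0 lx] [y0 ly]; split; first by rewrite muln_gt0 x0.
  by rewrite lognM // lx ly.
- move=> i ik; split; first by rewrite expn_gt0 pr_gt0.
  rewrite lognX logn_prime ?pr_prime //.
  case: eqP => [/pr_inj/val_inj e|]; last by rewrite muln0.
  by rewrite e eqxx in ik.
Qed.

Definition mu s (e : 'I_s -> int) : algC := \prod_(i < s) ((pr i)%:R : algC) ^ (e i).
Arguments mu {s}.

Lemma expz_sum (x : algC) I (r : seq I) (z : I -> int) : x != 0 ->
  \prod_(j <- r) x ^ (z j) = x ^ (\sum_(j <- r) z j).
Proof.
move=> x0; elim/big_rec2: _ => [|j a b _ ->]; first by rewrite expr0z.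
by rewrite expfzDr.
Qed.

Lemma mu_inj s (e f : 'I_s -> int) : mu e = mu f -> e =1 f.
Proof.
move=> h k.
pose a (g : 'I_s -> int) i := absz (g i + Posz (absz (e i) + absz (f i))%N).
have key : forall g : 'I_s -> int, (forall i, `|g i|%N = `|e i|%N \/ `|g i|%N = `|f i|%N) ->
   mu g * \prod_(i < s) ((pr i)%:R : algC) ^+ (`|e i|%N + `|f i|%N) =
   ((\prod_(i < s) pr i ^ a g i)%:R : algC).
  move=> g hg; rewrite /mu -big_split natr_prod /=; apply: eq_bigr => i _.
  rewrite natrX exprnP -expfzDr ?prC_neq0 //.
  rewrite [RHS]exprnP; congr (_ ^ _); rewrite /a gez0_abs //.
  by case: (hg i) => H; lia.
have := key e (fun i => or_introl erefl).
rewrite h key; last by move=> i; right.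
move/eqP; rewrite eqr_nat => /eqP hn.
have := logn_prod_pr _ (a f) k; rewrite hn logn_prod_pr /a => hk.
by lia.
Qed.
Lemma group_sum (I T : eqType) (r : seq I) (f : I -> T) (F : I -> algC) :
  \sum_(m <- r) F m = \sum_(e <- undup (map f r)) \sum_(m <- r | f m == e) F m.
Proof.
under [RHS]eq_bigr => e _ do rewrite big_mkcond.
rewrite exchange_big /=; apply: eq_big_seq => m mr.
rewrite (bigD1_seq (f m)) ?undup_uniq ?mem_undup ?map_f //= eqxx big1 ?addr0 //.
by move=> e; rewrite eq_sym => /negbTE ->.
Qed.

Lemma vandermonde (T : eqType) (U : seq T) (mu : T -> algC) (C : T -> algC) :
  uniq U -> {in U &, injective mu} ->
  (forall n, \sum_(e <- U) C e * mu e ^+ n = 0) -> forall e, e \in U -> C e = 0.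
Proof.
elim: U C => [|e0 U IH] C //= /andP[e0U uU] inj hs.
have inj' : {in U &, injective mu}.
  by move=> x y xU yU; apply: inj; rewrite inE ?xU ?yU orbT.
have hC' : forall e, e \in U -> C e * (mu e - mu e0) = 0.
  apply: (IH (fun e => C e * (mu e - mu e0))) => // n.
  have := hs n.+1; have := hs n.
  rewrite !big_cons => h0 h1.
  have -> : \sum_(e <- U) C e * (mu e - mu e0) * mu e ^+ n =
     (C e0 * mu e0 ^+ n.+1 + \sum_(j <- U) C j * mu j ^+ n.+1)
      - mu e0 * (C e0 * mu e0 ^+ n + \sum_(j <- U) C j * mu j ^+ n).
    rewrite mulrDr opprD addrACA exprS mulrCA subrr add0r mulr_sumr -sumrB.
    by apply: eq_bigr => j _; rewrite exprS; ring.
  by rewrite h0 h1 mulr0 subrr.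
have hU : forall e, e \in U -> C e = 0.
  move=> e eU; have := hC' e eU; move/eqP; rewrite mulf_eq0 subr_eq0 => /orP[/eqP //|/eqP h].
  have := inj e e0; rewrite inE eU orbT inE eqxx => /(_ isT isT h) ee.
  by move: e0U; rewrite -ee eU.
move=> e; rewrite inE => /orP[/eqP ->|]; last exact: hU.
have := hs 0%N; rewrite big_cons expr0 mulr1 big1_seq ?addr0 //.
by move=> j /andP[_ jU]; rewrite hU ?mul0r.
Qed.
Section Ideal.
Variable d : nat.
Implicit Types P Q : {mpoly algC[d]}.

Lemma I0 : ideal_xm1 (0 : {mpoly algC[d]}).
Proof. by exists (fun _ => 0); rewrite big1 // => i _; rewrite mul0r. Qed.

Lemma ID P Q : ideal_xm1 P -> ideal_xm1 Q -> ideal_xm1 (P + Q).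
Proof.
move=> [c ->] [c' ->]; exists (fun i => c i + c' i).
by rewrite -big_split; apply: eq_bigr => i _; rewrite mulrDl.
Qed.

Lemma IM P Q : ideal_xm1 Q -> ideal_xm1 (P * Q).
Proof.
move=> [c ->]; exists (fun i => P * c i).
by rewrite mulr_sumr; apply: eq_bigr => i _; rewrite mulrA.
Qed.

Lemma IX i : ideal_xm1 ('X_i - 1 : {mpoly algC[d]}).
Proof.
exists (fun j => (j == i)%:R); rewrite (bigD1 i) //= eqxx mul1r big1 ?addr0 //.
by move=> j /negbTE ->; rewrite mul0r.
Qed.

Lemma Imul1 P Q : ideal_xm1 (P - 1) -> ideal_xm1 (Q - 1) -> ideal_xm1 (P * Q - 1).
Proof.
move=> hP hQ; have -> : P * Q - 1 = P * (Q - 1) + (P - 1) by ring.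
by apply: ID => //; apply: IM.
Qed.

Lemma Imono (m : 'X_{1..d}) : ideal_xm1 ('X_[m] - 1 : {mpoly algC[d]}).
Proof.
rewrite mpolyXE_id.
apply: (big_ind (fun x : {mpoly algC[d]} => ideal_xm1 (x - 1))).
- by rewrite subrr; exact: I0.
- exact: Imul1.
- move=> i _; elim: (m i) => [|k IH]; first by rewrite expr0 subrr; exact: I0.
  by rewrite exprS; apply: Imul1 => //; exact: IX.
Qed.

Lemma eval1_ideal P : P.@[fun _ => 1] = 0 -> ideal_xm1 P.
Proof.
move=> h.
have -> : P = \sum_(m <- msupp P) P@_m *: ('X_[m] - 1).
  have e1 : \sum_(m <- msupp P) P@_m = 0.
    rewrite -[RHS]h mevalE; apply: eq_bigr => m _.
    by rewrite big1 ?mulr1 // => i _; rewrite expr1n.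
  rewrite [LHS]mpolyE; under [RHS]eq_bigr => m _ do rewrite scalerBr.
  by rewrite sumrB -scaler_suml e1 scale0r subr0.
elim/big_rec: _ => [|m x _ hx]; first exact: I0.
by apply: ID => //; rewrite -mul_mpolyC; apply: IM; exact: Imono.
Qed.

Lemma ideal_eval1 P : ideal_xm1 P -> P.@[fun _ => 1] = 0.
Proof.
move=> [c ->]; elim/big_rec: _ => [|i x _ hx]; first by rewrite meval0.
by rewrite mevalD hx mevalM mevalB mevalXU meval1 subrr mulr0 addr0.
Qed.
End Ideal.

Lemma A0_case d s (A : 'M[int]_(s, d)) : (forall i j, A i j = 0) ->
  forall P, toric_ideal A P <-> ideal_xm1 P.
Proof.
move=> A0 P.
have te0 : forall m, toric_exp A m = 0.
  by move=> m; apply/ffunP => i; rewrite !ffunE big1 // => j _; rewrite A0 mul0r.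
have ev : P.@[fun _ => 1] = \sum_(m <- msupp P) P@_m.
  rewrite mevalE; apply: eq_bigr => m _.
  by rewrite big1 ?mulr1 // => i _; rewrite expr1n.
split.
- move=> h; apply: eval1_ideal; rewrite ev.
  by have := h 0; under eq_bigl => m do rewrite te0 eqxx.
- move=> /ideal_eval1; rewrite ev => h e.
  case: (eqVneq e 0) => [->|ne].
    by under eq_bigl => m do rewrite te0 eqxx.
  by rewrite big_pred0 // => m; rewrite te0 eq_sym (negbTE ne).
Qed.

Definition lam d s (A : 'M[int]_(s, d)) (j : 'I_d) : rat :=
  \prod_(i < s) ((pr i)%:R : rat) ^ (A i j).
Arguments lam {d s}.
Definition Mx d s (A : 'M[int]_(s, d)) : 'M[rat]_d := diag_mx (\row_j lam A j).
Arguments Mx {d s}.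
Definition s1 d : 'cV[rat]_d := const_mx 1.

Lemma orbitE d s (A : 'M[int]_(s, d)) n : Mx A ^+ n *m s1 d = \col_j (lam A j ^+ n).
Proof.
elim: n => [|n IH].
  by rewrite expr0 mul1mx; apply/matrixP => i j; rewrite !mxE expr0.
rewrite exprS -mulmxA IH /Mx mul_diag_mx; apply/matrixP => i j.
by rewrite !mxE exprS.
Qed.

Lemma ratr_lam d s (A : 'M[int]_(s, d)) j : ratr (lam A j) = mu (fun i => A i j).
Proof.
rewrite /lam rmorph_prod; apply: eq_bigr => i _.
rewrite rmorphXz; first by congr (_ ^ _); exact: ratr_nat.
by rewrite unitfE pnatr_eq0 -lt0n pr_gt0.
Qed.

Lemma mu_exp s (e : 'I_s -> int) n : mu e ^+ n = mu (fun i => e i * n%:Z).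
Proof.
rewrite /mu -prodrXl; apply: eq_bigr => i _.
by rewrite exprnP exprz_exp.
Qed.

Lemma orbit_ptE d s (A : 'M[int]_(s, d)) n j :
  orbit_pt (Mx A) (s1 d) n j = mu (fun i => A i j) ^+ n.
Proof. by rewrite /orbit_pt orbitE mxE -ratr_lam; exact: rmorphXn. Qed.

Lemma evalE d s (A : 'M[int]_(s, d)) (P : {mpoly algC[d]}) n :
  P.@[orbit_pt (Mx A) (s1 d) n] =
  \sum_(m <- msupp P) P@_m * mu (toric_exp A m) ^+ n.
Proof.
rewrite mevalE; apply: eq_bigr => m _; congr (_ * _).
under eq_bigr => j _ do rewrite orbit_ptE exprAC.
rewrite prodrXl; congr (_ ^+ n).
rewrite /mu; under eq_bigr => j _ do rewrite -prodrXl.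
rewrite exchange_big /=; apply: eq_bigr => i _.
rewrite ffunE -expz_sum ?prC_neq0 //; apply: eq_bigr => j _.
by rewrite exprnP exprz_exp.
Qed.

Theorem theorem5p2 (d s : nat) (A : 'M[int]_(s, d)) :
  (exists P : {mpoly algC[d]}, ~ (toric_ideal A P <-> ideal_xm1 P)) ->
  exists (s0 : 'cV[rat]_d) (M : 'M[rat]_d),
    nontrivial_loop M s0 /\
    (forall P : {mpoly algC[d]}, invariant_ideal M s0 P <-> toric_ideal A P).
Proof.
move=> [P0 hP0].
case: (boolP [exists i, exists j, A i j != 0]) => [/existsP[i /existsP[j Aij]] | hA]; last first.
  exfalso; apply: hP0; apply: A0_case => i j.
  by apply/eqP/negP => h; move/negP: hA; apply; apply/existsP; exists i; apply/existsP; exists j; apply/negP.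
exists (s1 d), (Mx A); split.
  move=> [l hl].
  have inj : injective (fun n => Mx A ^+ n *m s1 d).
    move=> n n' /= e.
    have h : orbit_pt (Mx A) (s1 d) n j = orbit_pt (Mx A) (s1 d) n' j by rewrite /orbit_pt e.
    rewrite !orbit_ptE !mu_exp in h.
    by have := mu_inj _ _ _ h i => /= /(mulfI Aij) [].
  have := @uniq_leq_size _ (map (fun n => Mx A ^+ n *m s1 d) (iota 0 (size l).+1)) l.
  rewrite map_inj_uniq ?iota_uniq // size_map size_iota ltnn => h.
  have sub : {subset map (fun n => Mx A ^+ n *m s1 d) (iota 0 (size l).+1) <= l}.
    by move=> x /mapP[n _ ->]; exact: hl.
  by have := h isT sub.
move=> P; set r := msupp P; set f := toric_exp A; split.
  move=> hinv e.
  have hC : forall n, \sum_(e <- undup (map f r)) (\sum_(m <- r | f m == e) P@_m) * mu e ^+ n = 0.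
    move=> n; rewrite -[RHS](hinv n) evalE [RHS](group_sum _ _ _ f); apply: eq_bigr => e' _.
    by rewrite big_distrl; apply: eq_bigr => m /eqP <-.
  case: (boolP (e \in undup (map f r))) => eU.
    apply: (@vandermonde _ (undup (map f r)) (fun e : {ffun 'I_s -> int} => mu e) _ (undup_uniq _) _ hC e eU).
    by move=> x y _ _ h; apply/ffunP => k; exact: mu_inj _ _ _ h k.
  rewrite big1_seq // => m /andP[/eqP fe mr]; exfalso; move: eU.
  by rewrite mem_undup -fe map_f.
move=> ht n; rewrite evalE (group_sum _ _ _ f) big1_seq // => e' _.
rewrite (eq_bigr (fun m => P@_m * mu e' ^+ n)); last by move=> m /eqP <-.
by rewrite -big_distrl /= ht mul0r.
Qed.
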